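(* Let $n \ge 2$, $V=[1:n]$. Let $A$ be a deterministic adaptive algorithm (in the learning model described in the context, with no restriction on intervention sizes) such that for every total ordering $\sigma$ of $V$, when the ground truth is $\vec{K}_n(\sigma)$, the sequence of interventions $\mathcal{I}$ designed by $A$ results in all edges of $K_n$ being oriented. Then there exists a total ordering $\sigma$ of $V$ such that the family $\mathcal{I}$ designed by $A$ on ground truth $\vec{K}_n(\sigma)$ is a separating system on $V$, i.e. for every pair of distinct $i,j \in V$ there exists $I \in \mathcal{I}$ containing exactly one of $i$ and $j$.
   Context: For a total ordering $\sigma$ of $V=[1:n]$, $\vec{K}_n(\sigma)$ is the DAG on the complete graph $K_n$ in which each edge $\{u,v\}$ is directed from the earlier to the later vertex in $\sigma$. Learning model: the learner maintains a partially directed graph, initially the undirected complete graph $K_n$ (the true DAG is unknown). Performing an intervention on a set $I \subseteq V$ does the following: (R0) every edge with exactly one endpoint in $I$ becomes oriented as in the true DAG; then the following Meek rules are applied repeatedly until no further edge can be oriented: (R1) orient $a-b$ as $a\to b$ if there is $c$ with $c\to a$ and $c,b$ non-adjacent; (R2) orient $a-b$ as $a\to b$ if there is $c$ with $a\to c$ and $c\to b$; (R3) orient $a-b$ as $a\to b$ if there are $c,d$ with $a-c$, $a-d$, $c\to b$, $d\to b$ and $c,d$ non-adjacent; (R4) orient $a-c$ as $a\to c$ if there are $b,d$ with $b\to c$, $a-d$, $a-b$, $d\to b$ and $c,d$ non-adjacent. A deterministic adaptive algorithm chooses the intervention $I_{m+1}$ as a deterministic function of the partially directed graph obtained after $I_1,\ldots,I_m$;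 $\mathcal{I}=\{I_1,I_2,\ldots\}$ is the resulting family of interventions. *)

(* Defs.v *)
From mathcomp Require Import all_boot all_fingroup.
Set Implicit Arguments. Unset Strict Implicit. Unset Printing Implicit Defensive.

Section Model.
Variable n : nat.

(* A partially directed graph on V = 'I_n whose skeleton is the complete
   graph K_n; it is represented by its set of oriented edges:
   (a,b) \in G  means  a -> b.  Unoriented skeleton edges are undirected. *)
Definition pdg := {set 'I_n * 'I_n}.

Definition adjK (u v : 'I_n) : bool := u != v.
Definition nonadj (u v : 'I_n) : bool := (u != v) && ~~ adjK u v.

Definition dirE (G : pdg) (u v : 'I_n) : bool := (u, v) \in G.
Definition undir (G : pdg) (u v : 'I_n) : bool :=
  [&& adjK u v, ~~ dirE G u v & ~~ dirE G v u].

(* Meek rules: each says that the undirected edge a - b may be oriented a -> b *)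
Definition R1 (G : pdg) (a b : 'I_n) : bool :=
  [exists c, dirE G c a && nonadj c b].
Definition R2 (G : pdg) (a b : 'I_n) : bool :=
  [exists c, dirE G a c && dirE G c b].
Definition R3 (G : pdg) (a b : 'I_n) : bool :=
  [exists c, exists d,
     [&& undir G a c, undir G a d, dirE G c b, dirE G d b & nonadj c d]].
(* R4: orient a - c as a -> c *)
Definition R4 (G : pdg) (a c : 'I_n) : bool :=
  [exists b, exists d,
     [&& dirE G b c, undir G a d, undir G a b, dirE G d b & nonadj c d]].

Definition meek_applicable (G : pdg) (a b : 'I_n) : bool :=
  undir G a b && [|| R1 G a b, R2 G a b, R3 G a b | R4 G a b].

Definition meek_step (G : pdg) : pdg :=
  if [pick p : 'I_n * 'I_n | meek_applicable G p.1 p.2] is Some p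
  then p |: G else G.

(* apply Meek rules repeatedly until none applies: every productive step
   adds a new pair of V x V, so n*n iterations reach the fixpoint. *)
Definition meek_closure (G : pdg) : pdg := iter (n * n) meek_step G.

(* total ordering sigma of V given as a rank bijection:
   u is earlier than v iff sigma u < sigma v *)
Definition before (sigma : 'S_n) (u v : 'I_n) : bool := (sigma u < sigma v)%N.

(* R0: orient, as in the true DAG K_n(sigma), every edge with exactly one
   endpoint in I *)
Definition R0 (sigma : 'S_n) (I : {set 'I_n}) (G : pdg) : pdg :=
  G :|: [set p : 'I_n * 'I_n |
          [&& adjK p.1 p.2, (p.1 \in I) != (p.2 \in I) & before sigma p.1 p.2]].

Definition intervene (sigma : 'S_n) (I : {set 'I_n}) (G : pdg) : pdg :=
  meek_closure (R0 sigma I G).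

(* state of the learner after k interventions chosen by the deterministic
   adaptive algorithm A on ground truth K_n(sigma); start: undirected K_n *)
Fixpoint learner_run (A : pdg -> {set 'I_n}) (sigma : 'S_n) (k : nat) : pdg :=
  if k is k'.+1 then intervene sigma (A (learner_run A sigma k')) (learner_run A sigma k')
  else set0.

Definition fully_oriented (G : pdg) : bool :=
  [forall u, forall v, adjK u v ==> (dirE G u v || dirE G v u)].

(* the interv_family of interventions designed by A on ground truth K_n(sigma):
   those performed while the graph is not yet fully oriented *)
Definition interv_family (A : pdg -> {set 'I_n}) (sigma : 'S_n) (I : {set 'I_n}) : Prop :=
  exists k, ~~ fully_oriented (learner_run A sigma k) /\ I = A (learner_run A sigma k).

Definition separating_system (F : {set 'I_n} -> Prop) : Prop :=
  forall i j : 'I_n, i != j -> exists I, F I /\ (i \in I) != (j \in I).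

End Model.

(* Main.v *)
Require Import Defs.
From mathcomp Require Import all_boot all_fingroup.
Set Implicit Arguments. Unset Strict Implicit. Unset Printing Implicit Defensive.

Fixpoint sameS n (s : seq {set 'I_n}) (u v : 'I_n) : bool :=
  if s is X :: s' then ((u \in X) == (v \in X)) && sameS s' u v else true.
Fixpoint ltS n (s : seq {set 'I_n}) (u v : 'I_n) : bool :=
  if s is X :: s' then ltS s' u v || [&& sameS s' u v, u \in X & v \notin X] else false.

Lemma sameSxx n (s : seq {set 'I_n}) u : sameS s u u.
Proof. by elim: s => //= X s ->; rewrite eqxx. Qed.

Lemma sameSC n (s : seq {set 'I_n}) u v : sameS s u v = sameS s v u.
Proof. by elim: s => //= X s ->; rewrite eq_sym. Qed.

Lemma sameS_trans n (s : seq {set 'I_n}) u w v :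
  sameS s u w -> sameS s w v -> sameS s u v.
Proof.
elim: s => //= X s IH /andP[/eqP H1 H2] /andP[/eqP H3 H4].
by rewrite H1 H3 eqxx (IH H2 H4).
Qed.

Lemma ltSxx n (s : seq {set 'I_n}) u : ltS s u u = false.
Proof. by elim: s => //= X s ->; case: (u \in X); rewrite ?andbF. Qed.

Lemma ltS_same n (s : seq {set 'I_n}) u v : ltS s u v -> sameS s u v = false.
Proof.
elim: s => //= X s IH /orP[/IH ->|/and3P[-> Hu Hv]]; first by rewrite andbF.
by rewrite Hu (negbTE Hv).
Qed.

Lemma ltS_sameL n (s : seq {set 'I_n}) a c b :
  sameS s a c -> ltS s c b -> ltS s a b.
Proof.
elim: s => //= X s IH /andP[/eqP H1 H2] /orP[H|/and3P[H3 H4 H5]].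
  by rewrite (IH H2 H).
by rewrite (sameS_trans H2 H3) H1 H4 H5 orbT.
Qed.

Lemma ltS_sameR n (s : seq {set 'I_n}) a c b :
  ltS s a c -> sameS s c b -> ltS s a b.
Proof.
elim: s => //= X s IH /orP[H|/and3P[H3 H4 H5]] /andP[/eqP H1 H2].
  by rewrite (IH H H2).
by rewrite (sameS_trans H3 H2) -H1 H4 H5 orbT.
Qed.

Lemma ltS_trans n (s : seq {set 'I_n}) a c b :
  ltS s a c -> ltS s c b -> ltS s a b.
Proof.
elim: s => //= X s IH /orP[H|/and3P[H3 H4 H5]] /orP[H'|/and3P[H3' H4' H5']].
- by rewrite (IH H H').
- by rewrite (ltS_sameR H H3').
- by rewrite (ltS_sameL H3 H').
- by rewrite H4' in H5.
Qed.

Lemma ltS_total n (s : seq {set 'I_n}) u v :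
  sameS s u v = false -> ltS s u v || ltS s v u.
Proof.
elim: s => //= X s IH.
case Hs: (sameS s u v) => /=; last by move=> _; case/orP: (IH Hs) => ->; rewrite ?orbT.
rewrite andbT sameSC Hs /= => /negbT.
by case: (u \in X); case: (v \in X); rewrite //= ?orbT.
Qed.

Lemma sameS_sep n (s : seq {set 'I_n}) u v :
  sameS s u v = false -> exists2 X, X \in s & (u \in X) != (v \in X).
Proof.
elim: s => //= X s IH.
case H: ((u \in X) == (v \in X)) => /=.
  by move=> /IH [J HJ HJ']; exists J => //; rewrite inE HJ orbT.
by move=> _; exists X; rewrite ?inE ?eqxx // H.
Qed.

Definition Gof n (s : seq {set 'I_n}) : pdg n := [set p | ltS s p.1 p.2].

Fixpoint Sseq n (A : pdg n -> {set 'I_n}) k : seq {set 'I_n} :=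
  if k is k'.+1 then A (Gof (Sseq A k')) :: Sseq A k' else [::].

Lemma nonadjF n (u v : 'I_n) : nonadj u v = false.
Proof. by rewrite /nonadj /adjK andbN. Qed.

Lemma meek_fix n (s : seq {set 'I_n}) : meek_closure (Gof s) = Gof s.
Proof.
have H : meek_step (Gof s) = Gof s.
  rewrite /meek_step; case: pickP => // [[a b]] /=.
  rewrite /meek_applicable /undir /dirE /R1 /R2 /R3 /R4 !inE /=.
  case/andP => /and3P[_ Hab Hba].
  case/or4P.
  - by case/existsP => c; rewrite nonadjF andbF.
  - case/existsP => c; rewrite /dirE !inE /= => /andP[H1 H2].
    by rewrite (ltS_trans H1 H2) in Hab.
  - by case/existsP => c; case/existsP => d; rewrite nonadjF !andbF.
  - by case/existsP => c; case/existsP => d; rewrite nonadjF !andbF.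
rewrite /meek_closure; elim: (n * n) => //= k ->; exact: H.
Qed.

Lemma before_asym n (sigma : 'S_n) u v : before sigma u v -> before sigma v u = false.
Proof. by rewrite /before => H; rewrite ltnNge ltnW. Qed.

Lemma R0_step n (sigma : 'S_n) (X : {set 'I_n}) s :
  (forall u v, ltS (X :: s) u v -> before sigma u v) ->
  R0 sigma X (Gof s) = Gof (X :: s).
Proof.
move=> Hc; apply/setP => [[u v]]; rewrite !inE /=.
case Hl: (ltS s u v) => //=.
case Hs: (sameS s u v) => /=.
- case Hu: (u \in X); case Hv: (v \in X) => /=; rewrite ?andbF //.
  + rewrite ?andbT; apply/andP; split.
      by rewrite /adjK; apply/eqP => E; rewrite E Hv in Hu.
    by apply: Hc; rewrite /= Hl Hs Hu Hv.
  + have Hb : before sigma v u by apply: Hc; rewrite /= sameSC Hs Hu Hv orbT.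
    by rewrite (before_asym Hb) !andbF.
- have Hvu : ltS s v u by case/orP: (ltS_total Hs) => //; rewrite Hl.
  have Hb : before sigma v u by apply: Hc; rewrite /= Hvu.
  by rewrite (before_asym Hb) !andbF.
Qed.

Lemma run_sim n (A : pdg n -> {set 'I_n}) (sigma : 'S_n) :
  (forall k u v, ltS (Sseq A k) u v -> before sigma u v) ->
  forall k, learner_run A sigma k = Gof (Sseq A k).
Proof.
move=> Hc; elim => [|k IH] /=.
  by apply/setP => p; rewrite !inE.
rewrite IH /intervene R0_step ?meek_fix //; exact: (Hc k.+1).
Qed.

Lemma ltS_cons n (s : seq {set 'I_n}) X u v : ltS s u v -> ltS (X :: s) u v.
Proof. by move=> /= ->. Qed.

Lemma Sseq_mono n (A : pdg n -> {set 'I_n}) k d u v :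
  ltS (Sseq A k) u v -> ltS (Sseq A (k + d)) u v.
Proof.
move=> H; elim: d => [|d IH]; first by rewrite addn0.
by rewrite addnS /= IH.
Qed.

Lemma stab1 n (A : pdg n -> {set 'I_n}) k :
  Gof (Sseq A k.+1) = Gof (Sseq A k) -> Gof (Sseq A k.+2) = Gof (Sseq A k.+1).
Proof.
move=> E.
have -> : Sseq A k.+2 = A (Gof (Sseq A k)) :: Sseq A k.+1 by rewrite [Sseq A k.+2]/= E.
rewrite /=; set X := A (Gof (Sseq A k)).
apply/setP => p; rewrite !inE /=.
by case: (p.1 \in X); case: (p.2 \in X); rewrite ?andbF ?orbF.
Qed.

Lemma stab n (A : pdg n -> {set 'I_n}) j :
  Gof (Sseq A j.+1) = Gof (Sseq A j) -> forall d, Gof (Sseq A (j + d)) = Gof (Sseq A j).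
Proof.
move=> E.
have H : forall d, Gof (Sseq A (j + d).+1) = Gof (Sseq A (j + d)).
  elim => [|d IH]; first by rewrite addn0.
  by rewrite addnS; apply: stab1.
elim => [|d IH]; first by rewrite addn0.
by rewrite addnS H.
Qed.

Lemma grow n (A : pdg n -> {set 'I_n}) k :
  (forall j, j < k -> Gof (Sseq A j.+1) != Gof (Sseq A j)) -> k <= #|Gof (Sseq A k)|.
Proof.
elim: k => [//|k IH] H.
have Hsub : Gof (Sseq A k) \proper Gof (Sseq A k.+1).
  rewrite properEneq eq_sym H // andTb.
  apply/subsetP => p; rewrite !inE; exact: ltS_cons.
apply: leq_ltn_trans (proper_card Hsub).
by apply: IH => j Hj; apply: H; apply: ltnW.
Qed.

Lemma ltT n (A : pdg n -> {set 'I_n}) k u v :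
  ltS (Sseq A k) u v -> ltS (Sseq A (n * n)) u v.
Proof.
have [j Hj Ej] : exists2 j, j <= n * n & Gof (Sseq A j.+1) = Gof (Sseq A j).
  case: (boolP [exists j : 'I_(n * n).+1, Gof (Sseq A j.+1) == Gof (Sseq A j)]).
    by case/existsP => j /eqP E; exists j => //; rewrite -ltnS.
  move=> /existsPn Hn.
  have := grow (k := (n * n).+1) (A := A).
  have Hc : #|Gof (Sseq A (n * n).+1)| <= n * n.
    by apply: leq_trans (max_card _) _; rewrite card_prod card_ord.
  move=> Hg; suff: (n * n).+1 <= n * n by rewrite ltnn.
  apply: leq_trans (Hg _) Hc => i Hi; exact: (Hn (Ordinal Hi)).
move=> H.
case: (leqP k (n * n)) => Hk.
  by rewrite -(subnKC Hk); apply: Sseq_mono.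
have E1 := stab Ej (k - j).
have E2 := stab Ej (n * n - j).
rewrite subnKC in E1; last by apply: leq_trans Hj (ltnW Hk).
rewrite subnKC in E2 => //.
have E3 : Gof (Sseq A k) = Gof (Sseq A (n * n)) by rewrite E1 E2.
have : (u, v) \in Gof (Sseq A k) by rewrite inE.
by rewrite E3 inE.
Qed.

Definition ordT n (s : seq {set 'I_n}) (u v : 'I_n) :=
  ltS s u v || (sameS s u v && (u < v)%N).

Lemma ordT_irr n (s : seq {set 'I_n}) u : ordT s u u = false.
Proof. by rewrite /ordT ltSxx ltnn andbF. Qed.

Lemma ordT_trans n (s : seq {set 'I_n}) a c b :
  ordT s a c -> ordT s c b -> ordT s a b.
Proof.
rewrite /ordT => /orP[H|/andP[H1 H2]] /orP[H'|/andP[H1' H2']].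
- by rewrite (ltS_trans H H').
- by rewrite (ltS_sameR H H1').
- by rewrite (ltS_sameL H1 H').
- by rewrite (sameS_trans H1 H1') (ltn_trans H2 H2') orbT.
Qed.

Lemma ordT_total n (s : seq {set 'I_n}) u v :
  u != v -> ordT s u v || ordT s v u.
Proof.
rewrite /ordT => Huv.
case Hs: (sameS s u v).
  rewrite sameSC Hs /=.
  by move: Huv; rewrite neq_ltn => /orP[->|->]; rewrite ?orbT.
by case/orP: (ltS_total Hs) => ->; rewrite ?orbT.
Qed.

Definition rank n (s : seq {set 'I_n}) (u : 'I_n) := #|[set w | ordT s w u]|.

Lemma rank_lt n (s : seq {set 'I_n}) u : rank s u < n.
Proof.
rewrite /rank -[X in _ < X]card_ord -cardsT; apply: proper_card.
rewrite properT; apply/negP => /eqP E.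
by have := in_setT u; rewrite -E inE ordT_irr.
Qed.

Lemma rank_mono n (s : seq {set 'I_n}) u v : ordT s u v -> rank s u < rank s v.
Proof.
move=> Huv; apply: proper_card; apply/properP; split.
  by apply/subsetP => w; rewrite !inE => H; exact: ordT_trans H Huv.
by exists u; rewrite !inE ?Huv ?ordT_irr.
Qed.

Lemma rank_inj n (s : seq {set 'I_n}) :
  injective (fun u => Ordinal (rank_lt s u)).
Proof.
move=> u v /(congr1 val) /= E; apply/eqP; apply/negPn/negP => Hne.
by case/orP: (ordT_total s Hne) => /rank_mono; rewrite E ltnn.
Qed.

Lemma Sseq_mem n (A : pdg n -> {set 'I_n}) m X :
  X \in Sseq A m -> exists2 k, k < m & X = A (Gof (Sseq A k)).
Proof.
elim: m => [//|m IH] /=; rewrite inE => /orP[/eqP ->|/IH [k Hk ->]].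
  by exists m.
by exists k => //; apply: ltnW.
Qed.

Theorem theorem2 (n : nat) (A : pdg n -> {set 'I_n}) :
  (2 <= n)%N ->
  (forall sigma : 'S_n, exists m, fully_oriented (learner_run A sigma m)) ->
  exists sigma : 'S_n, separating_system (interv_family A sigma).
Proof.
move=> _ Hfull.
set s := Sseq A (n * n).
set sigma := perm (@rank_inj n s).
exists sigma.
have Hc : forall k u v, ltS (Sseq A k) u v -> before sigma u v.
  move=> k u v /ltT H; rewrite /before !permE /=; apply: rank_mono.
  by rewrite /ordT H.
have Hsim := run_sim Hc.
have Hex : exists m, (fun m => fully_oriented (learner_run A sigma m)) m.
  exact: Hfull.
case: (ex_minnP Hex) => m Hm Hmin.
move=> i j Hij.
have Hor : ltS (Sseq A m) i j || ltS (Sseq A m) j i.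
  move: Hm; rewrite Hsim => /forallP/(_ i)/forallP/(_ j).
  by rewrite /adjK Hij /dirE !inE.
have Hs : sameS (Sseq A m) i j = false.
  by case/orP: Hor => /ltS_same; rewrite // sameSC.
case: (sameS_sep Hs) => X HX HXs.
case: (Sseq_mem HX) => k Hk EX.
exists X; split => //.
exists k; split; last by rewrite Hsim.
apply/negP => Hf; have := Hmin k Hf; by rewrite leqNgt Hk.
Qed.
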